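(* Assume that no connected component of nonabsorbing action profiles is rectangular. If $w\in W_H\setminus W$, then there are $\ell\in\{1,\dots,L\}$ and $x\in X^\ell$ such that $w\in W_H(x)$ and ${\cal E}_J(x)\ne\emptyset$.
   Context: $I$ is a finite set of players, $A_i$ finite nonempty action sets, $A=\prod_iA_i$, $r_i:A\to(0,1]$, $p:A\to[0,1]$. $B=\{a:p(a)=0\}$ with connected components $B^1,\dots,B^L$ in the graph where $a,a'\in B$ are adjacent iff $a_{-i}=a'_{-i}$ for some $i$; $B^\ell$ is rectangular if it is a product $\prod_iB^\ell_i$. Let $\Xi=\prod_i\Delta(A_i)$, $p(x)$ and $r_i(x)$ the multilinear extensions ($r_i(x)=\sum_ar_i(a)p(a)\prod_jx_j(a_j)/p(x)$ when $p(x)>0$), $X^\ell=\{x\in\Xi:\prod_i{\rm supp}(x_i)\subseteq B^\ell\}$, $X=\bigcup_\ell X^\ell$. $\rho_i(x):=\max\{r_i(a_i,x_{-i}):a_i\in A_i,\ p(a_i,x_{-i})>0\}$, with $\max\emptyset=-\infty$. For $x\in X$: $W_H(x):=\{w\in\mathbb R^I:w_i>\rho_i(x)\ \forall i\}$; $W(x):=\{w\in\mathbb R^I: w_i\ge\rho_i(x)\ \forall i,\ w_i=\rho_i(x)\text{ for some }i\}$; $W_H:=\bigcup_{x\in X}W_H(x)$, $W:=\bigcup_{x\in X}W(x)$. For $x\in X$, $(J,a_J)$ with $\emptyset\neq J\subseteq I$, $a_J\in\prod_{i\in J}A_i$, is an exit at $x$ if $p(a_J,x_{-J})>0$ and $p(a_{J'},x_{-J'})=0$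 for all proper $J'\subsetneq J$; a joint exit if $|J|\ge 2$; ${\cal E}_J(x)$ is the set of joint exits at $x$. *)

(* Defs.v *)
From HB Require Import structures.
From mathcomp Require Import all_boot all_order all_algebra.
From mathcomp Require Import reals constructive_ereal.
Set Implicit Arguments. Unset Strict Implicit. Unset Printing Implicit Defensive.
Import Order.TTheory GRing.Theory Num.Theory.
Local Open Scope ring_scope.

Section Game.
Context {R : realType} {I : finType} (A : I -> finType).

Definition profile := {dffun forall i : I, A i}.

(* mixed action profiles (elements of prod_i R^{A_i}); x in Xi iff is_mixed x *)
Definition mprofile := forall i : I, {ffun A i -> R}.

Definition is_mixed (x : mprofile) : Prop :=
  forall i, (forall a, 0 <= x i a) /\ \sum_(a : A i) x i a = 1.

Definition pdelta (i : I) (a : A i) : {ffun A i -> R} :=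
  [ffun b => if b == a then 1 else 0].

Definition deviate1 (x : mprofile) (i : I) (ai : A i) : mprofile :=
  dfwith x (pdelta ai).

(* (a_J, x_{-J}); only the coordinates of a in J are used *)
Definition deviate (x : mprofile) (J : {set I}) (a : profile) : mprofile :=
  fun j => if j \in J then pdelta (a j) else x j.

Definition mlext (f : profile -> R) (y : mprofile) : R :=
  \sum_(a : profile) f a * \prod_(j : I) y j (a j).

Variables (r : I -> profile -> R) (p : profile -> R).

Definition rx (i : I) (y : mprofile) : R :=
  mlext (fun a => r i a * p a) y / mlext p y.

Definition rho (x : mprofile) (i : I) : \bar R :=
  \big[Order.max/-oo%E]_(ai : A i | 0 < mlext p (deviate1 x ai))
     (rx i (deviate1 x ai))%:E.

Definition adjB : rel profile := fun a b =>
  [&& p a == 0, p b == 0 & [exists i, [forall j, (j != i) ==> (a j == b j)]]].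

(* C is one of the connected components B^1, ..., B^L *)
Definition is_component (C : {set profile}) : Prop :=
  exists a, p a = 0 /\ C = [set b | connect adjB a b].

Definition rectangular (C : {set profile}) : Prop :=
  exists Ci : forall i, {set A i}, C = [set a : profile | [forall i, a i \in Ci i]].

Definition inXC (C : {set profile}) (x : mprofile) : Prop :=
  is_mixed x /\ forall a : profile, (forall i, 0 < x i (a i)) -> a \in C.

Definition inX (x : mprofile) : Prop := exists C, is_component C /\ inXC C x.

Definition inWHx (x : mprofile) (w : I -> R) : Prop :=
  forall i, (rho x i < (w i)%:E)%E.

Definition inWx (x : mprofile) (w : I -> R) : Prop :=
  (forall i, (rho x i <= (w i)%:E)%E) /\ exists i, rho x i = (w i)%:E.

Definition inWH (w : I -> R) : Prop := exists x, inX x /\ inWHx x w.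
Definition inW (w : I -> R) : Prop := exists x, inX x /\ inWx x w.

Definition is_exit (x : mprofile) (J : {set I}) (aJ : profile) : Prop :=
  J != set0 /\ 0 < mlext p (deviate x J aJ) /\
  forall J' : {set I}, J' \proper J -> mlext p (deviate x J' aJ) = 0.

Definition has_joint_exit (x : mprofile) : Prop :=
  exists (J : {set I}) (aJ : profile), (2 <= #|J|)%N /\ is_exit x J aJ.

End Game.

(* Main.v *)
Require Import Defs.
From HB Require Import structures.
From mathcomp Require Import all_boot all_order all_algebra.
From mathcomp Require Import reals constructive_ereal.
From mathcomp Require Import ring lra.
From Stdlib Require Classical_Prop.
Import Order.TTheory GRing.Theory Num.Theory.
Local Open Scope ring_scope.

Set Implicit Arguments. Unset Strict Implicit. Unset Printing Implicit Defensive.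

Section Basics.
Context {R : realType} {I : finType} (A : I -> finType).

Lemma mlext_congr (f : profile A -> R) (y y' : mprofile (R:=R) A) :
  (forall j b, y j b = y' j b) -> mlext f y = mlext f y'.
Proof.
move=> h; rewrite /mlext; apply: eq_bigr => a _; congr (_ * _).
by apply: eq_bigr => j _; rewrite h.
Qed.

Lemma pdeltaE i (b c : A i) : pdelta (R:=R) b c = if c == b then 1 else 0.
Proof. by rewrite /pdelta ffunE. Qed.

Lemma mlext_expand (f : profile A -> R) (y : mprofile (R:=R) A) i :
  mlext f y = \sum_(b : A i) y i b * mlext f (dfwith y (pdelta b)).
Proof.
rewrite /mlext.
under [RHS]eq_bigr => b _ do rewrite big_distrr /=.
rewrite exchange_big /=; apply: eq_bigr => a _.
rewrite (bigD1 i) //=.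
set Q := \prod_(j | j != i) y j (a j).
have HQ : forall b : A i, \prod_j dfwith y (pdelta b) j (a j) = pdelta b (a i) * Q.
  move=> b; rewrite (bigD1 i) //= dfwith_in; congr (_ * _).
  apply: eq_bigr => j hj; rewrite dfwith_out //; by rewrite eq_sym.
under eq_bigr => b _ do rewrite HQ pdeltaE.
rewrite (bigD1 (a i)) //= eqxx big1 ?addr0; first by rewrite mul1r mulrCA.
by move=> b hb; rewrite eq_sym (negbTE hb) mul0r mulr0 mulr0.
Qed.

Lemma dfwith_congr (y y' : mprofile (R:=R) A) i (u u' : {ffun A i -> R}) :
  (forall j, j != i -> forall b, y j b = y' j b) -> (forall b, u b = u' b) ->
  forall j b, dfwith y u j b = dfwith y' u' j b.
Proof.
move=> hy hu j; case: (eqVneq i j) => [<-|ne] b; first by rewrite !dfwith_in.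
by rewrite !dfwith_out // hy // eq_sym.
Qed.

Lemma mlext_ge0 (f : profile A -> R) (y : mprofile (R:=R) A) :
  (forall a, 0 <= f a) -> (forall j b, 0 <= y j b) -> 0 <= mlext f y.
Proof.
move=> hf hy; rewrite /mlext; apply: sumr_ge0 => a _.
by apply: mulr_ge0 => //; apply: prodr_ge0.
Qed.

Lemma mlext_le (f g : profile A -> R) (y : mprofile (R:=R) A) :
  (forall a, f a <= g a) -> (forall j b, 0 <= y j b) -> mlext f y <= mlext g y.
Proof.
move=> hf hy; rewrite /mlext; apply: ler_sum => a _.
by apply: ler_wpM2r => //; apply: prodr_ge0.
Qed.

Lemma mlext_pure (f : profile A -> R) (y : mprofile (R:=R) A) (c : profile A) :
  (forall j b, y j b = pdelta (c j) b) -> mlext f y = f c.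
Proof.
move=> hy; rewrite /mlext (bigD1 c) //=.
have -> : \prod_j y j (c j) = 1 by rewrite big1 // => j _; rewrite hy pdeltaE eqxx.
rewrite mulr1 big1 ?addr0 // => a hac.
have [j hj] : exists j, a j != c j.
  apply/existsP; apply: contraR hac; rewrite negb_exists => /forallP h.
  by apply/eqP/ffunP => j; apply/eqP; move: (h j); rewrite negbK.
by rewrite (bigD1 j) //= hy pdeltaE (negbTE hj) mul0r mulr0.
Qed.

Lemma mlext_affine (f : profile A -> R) (y y0 y1 : mprofile (R:=R) A) i (t : R) :
  (forall j, j != i -> forall b, y j b = y0 j b /\ y1 j b = y0 j b) ->
  (forall b, y i b = (1 - t) * y0 i b + t * y1 i b) ->
  mlext f y = (1 - t) * mlext f y0 + t * mlext f y1.
Proof.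
move=> hj hi; rewrite !(mlext_expand f _ i) !big_distrr -big_split /=.
apply: eq_bigr => b _.
have e0 : mlext f (dfwith y (pdelta b)) = mlext f (dfwith y0 (pdelta b)).
  apply: mlext_congr => j' b'; apply: dfwith_congr => // j jn b''.
  by case: (hj j jn b'') => ->.
have e1 : mlext f (dfwith y1 (pdelta b)) = mlext f (dfwith y0 (pdelta b)).
  apply: mlext_congr => j' b'; apply: dfwith_congr => // j jn b''.
  by case: (hj j jn b'') => _ ->.
by rewrite e0 e1 hi; ring.
Qed.

End Basics.

Section Rho.
Context {R : realType} {I : finType} (A : I -> finType).
Context (r : I -> profile A -> R) (p : profile A -> R).

Lemma deviate1_congr (y y' : mprofile (R:=R) A) k (a : A k) :
  (forall j b, y j b = y' j b) -> forall j b, deviate1 y a j b = deviate1 y' a j b.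
Proof. by move=> h; apply: dfwith_congr => // j _ b; rewrite h. Qed.

Lemma rho_congr (y y' : mprofile (R:=R) A) k :
  (forall j b, y j b = y' j b) -> rho r p y k = rho r p y' k.
Proof.
move=> h; rewrite /rho.
have e : forall f (a : A k), mlext f (deviate1 y a) = mlext f (deviate1 y' a).
  by move=> f a; apply: mlext_congr; apply: deviate1_congr.
rewrite /rx; under eq_bigl => a do rewrite e.
by apply: eq_bigr => a _; rewrite !e.
Qed.

Lemma rho_lt (y : mprofile (R:=R) A) k (c : R) :
  (rho r p y k < c%:E)%E <->
  (forall a : A k, 0 < mlext p (deviate1 y a) -> rx r p k (deviate1 y a) < c).
Proof.
rewrite /rho; split.
  by move/bigmax_ltP => [_ h] a ha; move: (h a ha); rewrite lte_fin.
move=> h; apply/bigmax_ltP; split; first exact: ltNyr.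
by move=> a ha; rewrite lte_fin; apply: h.
Qed.

Lemma rho_le (y : mprofile (R:=R) A) k (c : R) :
  (rho r p y k <= c%:E)%E <->
  (forall a : A k, 0 < mlext p (deviate1 y a) -> rx r p k (deviate1 y a) <= c).
Proof.
rewrite /rho; split.
  by move/bigmax_leP => [_ h] a ha; move: (h a ha); rewrite lee_fin.
move=> h; apply/bigmax_leP; split; first exact: leNye.
by move=> a ha; rewrite lee_fin; apply: h.
Qed.

Lemma rho_ge (y : mprofile (R:=R) A) k (a : A k) :
  0 < mlext p (deviate1 y a) -> ((rx r p k (deviate1 y a))%:E <= rho r p y k)%E.
Proof. by move=> ha; rewrite /rho; apply: le_bigmax_cond. Qed.

Lemma inWHx_congr (y y' : mprofile (R:=R) A) w :
  (forall j b, y j b = y' j b) -> inWHx r p y w -> inWHx r p y' w.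
Proof. by move=> h hw k; rewrite -(rho_congr k h). Qed.

End Rho.

Section Path.
Context {R : realType} {I : finType} (A : I -> finType).
Context (r : I -> profile A -> R) (p : profile A -> R).
Hypothesis hr : forall i a, 0 < r i a <= 1.
Hypothesis hp : forall a, 0 <= p a <= 1.
Local Notation mp := (mprofile (R:=R) A).

Definition mix i (u v : {ffun A i -> R}) (t : R) : {ffun A i -> R} :=
  [ffun b => (1 - t) * u b + t * v b].

Lemma pdelta_ge0 i (a b : A i) : 0 <= pdelta (R:=R) a b.
Proof. by rewrite pdeltaE; case: ifP. Qed.

Lemma dfwith_ge0 (y : mp) i (u : {ffun A i -> R}) :
  (forall j b, 0 <= y j b) -> (forall b, 0 <= u b) -> forall j b, 0 <= dfwith y u j b.
Proof.
move=> hy hu j; case: (eqVneq i j) => [<-|ne] b; first by rewrite dfwith_in.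
by rewrite dfwith_out.
Qed.

Lemma dev1_ge0 (y : mp) k (a : A k) :
  (forall j b, 0 <= y j b) -> forall j b, 0 <= deviate1 y a j b.
Proof. by move=> hy; apply: dfwith_ge0 => // b; apply: pdelta_ge0. Qed.

Lemma dev_aff f (x : mp) i (u v : {ffun A i -> R}) t k (a : A k) :
  mlext f (deviate1 (dfwith x (mix u v t)) a) =
  (1 - t) * mlext f (deviate1 (dfwith x u) a) + t * mlext f (deviate1 (dfwith x v) a).
Proof.
apply: (@mlext_affine _ _ A f _ _ _ i).
  move=> j jn; rewrite /deviate1; case: (eqVneq k j) => [<-|ne] b.
    by rewrite !dfwith_in.
  rewrite !(dfwith_out _ _ ne) !dfwith_out //; by rewrite eq_sym.
rewrite /deviate1; case: (eqVneq k i) => [e|ne] b.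
  by subst k; rewrite !dfwith_in; ring.
by rewrite !(dfwith_out _ _ ne) !dfwith_in /mix ffunE.
Qed.

Let N k (z : mp) := mlext (fun c => r k c * p c) z.

Lemma N_bounds k (z : mp) : (forall j b, 0 <= z j b) -> 0 <= N k z <= mlext p z.
Proof.
move=> hz; apply/andP; split.
  apply: mlext_ge0 => // c; apply: mulr_ge0; [by case/andP: (hr k c) => /ltW|by case/andP: (hp c)].
apply: mlext_le => // c; case/andP: (hr k c) => _ h1; case/andP: (hp c) => h0 _.
by rewrite -{2}(mul1r (p c)) ler_wpM2r.
Qed.

Lemma rx_lt k (z : mp) c : 0 < mlext p z -> (rx r p k z < c) = (N k z < c * mlext p z).
Proof. by move=> hz; rewrite /rx ltr_pdivrMr. Qed.

Lemma rx_le k (z : mp) c : 0 < mlext p z -> (rx r p k z <= c) = (N k z <= c * mlext p z).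
Proof. by move=> hz; rewrite /rx ler_pdivrMr. Qed.

Lemma rx_eq k (z : mp) c : 0 < mlext p z -> N k z = c * mlext p z -> rx r p k z = c.
Proof. by move=> hz he; rewrite /rx /N in he *; rewrite he mulfK // gt_eqF. Qed.

Lemma path_lemma (x : mp) i (u v : {ffun A i -> R}) w :
  (forall j b, 0 <= x j b) -> (forall b, 0 <= u b) -> (forall b, 0 <= v b) ->
  ~ inW r p w ->
  (forall t, 0 < t <= 1 -> inX p (dfwith x (mix u v t))) ->
  (forall k (a : A k), 0 < mlext p (deviate1 (dfwith x v) a) ->
      0 < mlext p (deviate1 (dfwith x u) a)) ->
  inWHx r p (dfwith x u) w -> inWHx r p (dfwith x v) w.
Proof.
move=> hx hu hv hnW hX hsub h0.
pose T := {k : I & A k}.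
pose z0 (q : T) := deviate1 (dfwith x u) (tagged q).
pose z1 (q : T) := deviate1 (dfwith x v) (tagged q).
pose P0 q := mlext p (z0 q).
pose P1 q := mlext p (z1 q).
pose N0 q := N (tag q) (z0 q).
pose N1 q := N (tag q) (z1 q).
pose phi0 q := N0 q - w (tag q) * P0 q.
pose phi1 q := N1 q - w (tag q) * P1 q.
have z0ge : forall q j b, 0 <= z0 q j b.
  by move=> q; apply: dev1_ge0; apply: dfwith_ge0.
have z1ge : forall q j b, 0 <= z1 q j b.
  by move=> q; apply: dev1_ge0; apply: dfwith_ge0.
have hP0 : forall q, 0 <= P0 q by move=> q; apply: mlext_ge0 => // c; case/andP: (hp c).
have hP1 : forall q, 0 <= P1 q by move=> q; apply: mlext_ge0 => // c; case/andP: (hp c).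
have hN1 : forall q, 0 <= N1 q <= P1 q by move=> q; apply: N_bounds.
have hphi0 : forall q, 0 < P0 q -> phi0 q < 0.
  move=> q hq; move: (h0 (tag q)) => /rho_lt /(_ (tagged q) hq).
  by rewrite rx_lt // /phi0 subr_lt0.
have hsubq : forall q, 0 < P1 q -> 0 < P0 q by move=> q; apply: hsub.
have claim : forall q, 0 < P1 q -> phi1 q < 0.
  move=> q hq; rewrite ltNge; apply/negP => hge.
  pose S q := (0 < P1 q) && (0 <= phi1 q).
  pose tau q := - phi0 q / (phi1 q - phi0 q).
  have Sq : S q by rewrite /S hq hge.
  have hS : forall q, S q -> [/\ phi0 q < 0, 0 < phi1 q - phi0 q, 0 < tau q, tau q <= 1
      & (1 - tau q) * phi0 q + tau q * phi1 q = 0].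
    move=> q' /andP [h1 h2]; have h3 := hphi0 _ (hsubq _ h1).
    have h4 : 0 < phi1 q' - phi0 q' by lra.
    split => //.
    - by apply: divr_gt0 => //; lra.
    - by rewrite /tau ler_pdivrMr // mul1r; lra.
    - rewrite /tau; field; lra.
  case: (arg_minP tau Sq) => qm Sqm hmin.
  have [_ _ ts0 ts1 _] := hS _ Sqm.
  set ts := tau qm in ts0 ts1 hmin *.
  pose y := dfwith x (mix u v ts).
  have aff : forall f k (a : A k), mlext f (deviate1 y a) =
      (1 - ts) * mlext f (deviate1 (dfwith x u) a) + ts * mlext f (deviate1 (dfwith x v) a).
    by move=> f k a; apply: dev_aff.
  have hle : forall q, 0 < mlext p (deviate1 y (tagged q)) ->
      (1 - ts) * phi0 q + ts * phi1 q <= 0.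
    move=> q' hq'.
    have [P0z|P0p] := eqVneq (P0 q') 0.
      have P1z : P1 q' = 0.
        apply/eqP; rewrite eq_le hP1 andbT leNgt; apply/negP => /hsubq.
        by rewrite P0z ltxx.
      by move: hq'; rewrite aff -/(P0 q') -/(P1 q') P0z P1z !mulr0 addr0 ltxx.
    have P0pos : 0 < P0 q' by rewrite lt_def P0p hP0.
    have f0 := hphi0 _ P0pos.
    case: (boolP (S q')) => Sq'.
      have [_ d _ _ e] := hS _ Sq'.
      have le1 : ts <= tau q' by apply: hmin.
      have : ts * (phi1 q' - phi0 q') <= tau q' * (phi1 q' - phi0 q').
        by apply: ler_wpM2r => //; exact: ltW.
      by lra.
    have ph1 : phi1 q' <= 0.
      move: Sq'; rewrite /S negb_and => /orP [h|h]; last first.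
        by rewrite -ltNge in h; exact: ltW.
      rewrite -leNgt in h.
      have e1 : P1 q' = 0 by apply/eqP; rewrite eq_le hP1 andbT.
      have /andP [a1 a2] := hN1 q'.
      rewrite /phi1 e1 mulr0 subr0.
      by rewrite e1 in a2.
    have m1 : (1 - ts) * phi0 q' <= 0 by apply: mulr_ge0_le0; [lra|exact: ltW].
    have m2 : ts * phi1 q' <= 0 by apply: mulr_ge0_le0 => //; exact: ltW.
    lra.
  apply: hnW; exists y; split; first by apply: hX; rewrite ts0.
  have rle : forall k, (rho r p y k <= (w k)%:E)%E.
    move=> k; apply/rho_le => a ha.
    have := hle (Tagged A a) ha; rewrite rx_le //.
    rewrite /N !aff /phi0 /phi1 /N0 /N1 /P0 /P1 /z0 /z1 /N /=.
    by move=> h; lra.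
  split => //; exists (tag qm); apply/le_anti; rewrite rle /=.
  have hpos : 0 < mlext p (deviate1 y (tagged qm)).
    have Pq := hsubq _ (proj1 (andP Sqm)).
    rewrite aff -/(P0 qm) -/(P1 qm).
    have := proj1 (andP Sqm).
    move=> h1; have : 0 <= 1 - ts by lra.
    by nra.
  have := @rho_ge _ _ _ r p _ _ _ hpos; congr (_ <= _)%E; congr (_%:E).
  apply: rx_eq => //.
  have [_ _ _ _ e] := hS _ Sqm.
  rewrite /N !aff.
  move: e; rewrite /phi0 /phi1 /N0 /N1 /P0 /P1 /z0 /z1 /N -/ts /=.
  by move=> e; lra.
move=> k; apply/rho_lt => a ha; rewrite rx_lt //.
have := claim (Tagged A a) ha.
by rewrite /phi1 /N1 /P1 /z1 /= subr_lt0.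
Qed.

End Path.

Lemma connect_prop (T : finType) (e : rel T) (P : T -> Prop) (s t : T) :
  connect e s t -> P s -> (forall x y, connect e s x -> e x y -> P x -> P y) -> P t.
Proof.
move=> /connectP [q hq ->] Ps step.
suff gen : forall x, connect e s x -> path e x q -> P x -> P (last x q).
  by apply: gen => //; exact: connect0.
clear hq.
elim: q => [|y q IH] x hsx //= /andP [exy hp] Px.
apply: IH => //; first exact: connect_trans hsx (connect1 exy).
exact: step exy Px.
Qed.

Section Comb.
Context {R : realType} {I : finType} (A : I -> finType).
Context (r : I -> profile A -> R) (p : profile A -> R).
Hypothesis hp : forall a, 0 <= p a <= 1.
Hypothesis hr : forall i a, 0 < r i a <= 1.
Local Notation mp := (mprofile (R:=R) A).

Definition pure (s : profile A) : mp := fun j => pdelta (s j).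
Definition updJ (s c : profile A) (J : {set I}) : profile A :=
  [ffun j => if j \in J then c j else s j].
Definition mk1 (s : profile A) k (e : A k) : profile A :=
  [ffun j => dfwith (fun j => s j) e j].

Lemma updJE s c J j : updJ s c J j = if j \in J then c j else s j.
Proof. by rewrite ffunE. Qed.

Lemma updJ0 s c : updJ s c set0 = s.
Proof. by apply/ffunP => j; rewrite updJE in_set0. Qed.

Lemma updJT s c : updJ s c setT = c.
Proof. by apply/ffunP => j; rewrite updJE in_setT. Qed.

Lemma mk1_in s k (e : A k) : mk1 s e k = e.
Proof. by rewrite ffunE dfwith_in. Qed.

Lemma mk1_out s k (e : A k) j : k != j -> mk1 s e j = s j.
Proof. by move=> h; rewrite ffunE dfwith_out. Qed.

Lemma mlext_dev_pure f s J c : mlext f (deviate (pure s) J c) = f (updJ s c J).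
Proof. by apply: mlext_pure => j b; rewrite /deviate /pure updJE; case: ifP. Qed.

Lemma mlext_pure' f s : mlext f (pure s) = f s.
Proof. exact: mlext_pure. Qed.

Lemma sum_pdelta i (a : A i) : \sum_b pdelta (R:=R) a b = 1.
Proof.
rewrite (bigD1 a) //= pdeltaE eqxx big1 ?addr0 // => b hb.
by rewrite pdeltaE (negbTE hb).
Qed.

Lemma pdelta_pos i (a b : A i) : 0 < pdelta (R:=R) a b -> b = a.
Proof. by rewrite pdeltaE; case: eqP => // _; rewrite ltxx. Qed.

Lemma adjBP a b : adjB p a b ->
  [/\ p a = 0, p b = 0 & exists i, forall j, j != i -> a j = b j].
Proof.
case/and3P => /eqP h1 /eqP h2 /existsP [i /forallP h]; split => //.
by exists i => j hj; apply/eqP; move: (h j); rewrite hj.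
Qed.

Lemma adjB_sym : symmetric (adjB p).
Proof.
move=> a b; rewrite /adjB andbCA; congr (_ && (_ && _)).
apply/existsP/existsP => [] [i /forallP h]; exists i; apply/forallP => j;
  by apply/implyP => hj; rewrite eq_sym; move/implyP: (h j); apply.
Qed.

Lemma PP s : ~ has_joint_exit p (pure s) -> p s = 0 ->
  forall (J : {set I}) c, (forall l, l \in J -> p (updJ s c [set l]) = 0) -> p (updJ s c J) = 0.
Proof.
move=> hJ ps0.
suff h : forall n (J : {set I}) c, (#|J| <= n)%N ->
    (forall l, l \in J -> p (updJ s c [set l]) = 0) -> p (updJ s c J) = 0.
  by move=> J c; apply: (h #|J|).
elim=> [|n IH] J c hn hl.
  by move: hn; rewrite leqn0 cards_eq0 => /eqP ->; rewrite updJ0.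
case: (leqP 2 #|J|) => h2.
  apply/eqP; rewrite eq_le (proj1 (andP (hp _))) andbT leNgt; apply/negP => hpos.
  apply: hJ; exists J, c; split => //; split.
    by rewrite -card_gt0; apply: leq_trans h2.
  split; first by rewrite mlext_dev_pure.
  move=> J' hprop; rewrite mlext_dev_pure; apply: IH.
    by rewrite -ltnS; exact: leq_trans (proper_card hprop) hn.
  by move=> l hl'; apply: hl; apply: (subsetP (proper_sub hprop)).
move: h2; rewrite ltnS leq_eqVlt ltnS leqn0 cards_eq0 => /orP [h1|/eqP ->].
  by case/cards1P: h1 => l e; rewrite e; apply: hl; rewrite e in_set1.
by rewrite updJ0.
Qed.

Lemma CC s c : p s = 0 -> (forall J : {set I}, p (updJ s c J) = 0) ->
  forall J : {set I}, connect (adjB p) s (updJ s c J).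
Proof.
move=> ps hall.
suff h : forall n (J : {set I}), #|J| = n -> connect (adjB p) s (updJ s c J).
  by move=> J; apply: (h #|J|).
elim=> [|n IH] J hn.
  by move/eqP: hn; rewrite cards_eq0 => /eqP ->; rewrite updJ0 connect0.
have [l hl] : exists l, l \in J.
  by apply/set0Pn; rewrite -card_gt0 hn.
have hn' : #|J :\ l| = n by move: hn; rewrite (cardsD1 l J) hl add1n => -[].
apply: connect_trans (IH _ hn') (connect1 _).
apply/and3P; split; try by apply/eqP; apply: hall.
apply/existsP; exists l; apply/forallP => j; apply/implyP => hj.
by rewrite !updJE in_setD1 hj.
Qed.

Lemma DC s s' : adjB p s s' ->
  (forall (J : {set I}) c, (forall l, l \in J -> p (updJ s c [set l]) = 0) ->
     p (updJ s c J) = 0) ->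
  forall t l, p (updJ s t [set l]) = 0 -> p (updJ s' t [set l]) = 0.
Proof.
case/adjBP => ps ps' [i hi] hPP t l h.
case: (eqVneq l i) => [e|nli].
  subst l; rewrite -h; congr (p _); apply/ffunP => j; rewrite !updJE in_set1.
  by case: (eqVneq j i) => // nji; rewrite hi.
set c := updJ s' t [set l].
rewrite -(updJT s c); apply: hPP => m _.
case: (eqVneq m i) => [e|nmi].
  subst m; rewrite -ps'; congr (p _); apply/ffunP => j; rewrite !updJE in_set1.
  case: (eqVneq j i) => [e|nji]; last by rewrite hi.
  by subst j; rewrite in_set1 eq_sym (negbTE nli).
case: (eqVneq m l) => [e|nml].
  subst m; rewrite -h; congr (p _); apply/ffunP => j; rewrite !updJE in_set1.
  case: (eqVneq j l) => [e|//].
  by subst j.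
rewrite -ps; congr (p _); apply/ffunP => j; rewrite !updJE in_set1.
case: (eqVneq j m) => [e|//].
subst j; rewrite ?updJE in_set1 (negbTE nml) hi //.
Qed.

Lemma updJ_eq (s c : profile A) (J : {set I}) (q : profile A) : (forall j, j \in J -> c j = q j) ->
  (forall j, j \notin J -> s j = q j) -> updJ s c J = q.
Proof.
move=> h1 h2; apply/ffunP => j; rewrite updJE; case: ifPn => hj.
  exact: h1. exact: h2.
Qed.

Lemma dev1_pure (q : profile A) k (e : A k) : forall j b, deviate1 (pure q) e j b = pure (mk1 q e) j b.
Proof.
move=> j; rewrite /deviate1 /pure; case: (eqVneq k j) => [<-|ne] b.
  by rewrite dfwith_in mk1_in.
by rewrite dfwith_out // mk1_out.
Qed.

Lemma dfwith_self (y : mp) i : forall j b, dfwith y (y i) j b = y j b.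
Proof. by move=> j; case: (eqVneq i j) => [<-|ne] b; rewrite ?dfwith_in ?dfwith_out. Qed.

Lemma mix_ge0 i (u v : {ffun A i -> R}) t : 0 <= t <= 1 -> (forall b, 0 <= u b) ->
  (forall b, 0 <= v b) -> forall b, 0 <= mix u v t b.
Proof.
move=> /andP [t0 t1] hu hv b; rewrite /mix ffunE.
by apply: addr_ge0; apply: mulr_ge0 => //; lra.
Qed.

Lemma mix_sum i (u v : {ffun A i -> R}) t : \sum_b u b = 1 -> \sum_b v b = 1 ->
  \sum_b mix u v t b = 1.
Proof.
move=> hu hv; rewrite /mix; under eq_bigr => b _ do rewrite ffunE.
by rewrite big_split /= -!mulr_sumr hu hv; ring.
Qed.

Lemma pure_mixed (s : profile A) : is_mixed (pure s).
Proof. by move=> j; split; [move=> b; apply: pdelta_ge0| apply: sum_pdelta]. Qed.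

Lemma edge_step (C : {set profile A}) w (s t : profile A) : ~ inW r p w -> is_component p C -> s \in C -> t \in C ->
  adjB p s t -> ~ has_joint_exit p (pure s) -> inWHx r p (pure s) w -> inWHx r p (pure t) w.
Proof.
move=> hnW hC sC tC hadj hnJ hWs.
case/adjBP: (hadj) => ps pt [i hi].
have e1 : forall j b, dfwith (pure s) (pdelta (t i)) j b = pure t j b.
  move=> j; rewrite /pure; case: (eqVneq i j) => [<-|ne] b; first by rewrite dfwith_in.
  by rewrite dfwith_out // hi // eq_sym.
apply: (inWHx_congr e1).
apply: (@path_lemma _ _ A r p hr hp (pure s) i (pdelta (s i)) (pdelta (t i)) w).
- by move=> j b; apply: pdelta_ge0.
- by move=> b; apply: pdelta_ge0.
- by move=> b; apply: pdelta_ge0.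
- exact: hnW.
- move=> tt /andP [t0 t1]; exists C; split => //; split.
    move=> j; split.
      apply: dfwith_ge0; first by move=> j' b; apply: pdelta_ge0.
      by apply: mix_ge0; [rewrite ltW| |] => // b; apply: pdelta_ge0.
    case: (eqVneq i j) => [<-|ne]; first by rewrite dfwith_in mix_sum // sum_pdelta.
    by rewrite dfwith_out // sum_pdelta.
  move=> a ha.
  have hj : forall j, j != i -> a j = s j.
    move=> j jn; move: (ha j); rewrite dfwith_out; last by rewrite eq_sym.
    exact: pdelta_pos.
  move: (ha i); rewrite dfwith_in /mix ffunE !pdeltaE.
  case: (eqVneq (a i) (s i)) => [ei _|nei].
    suff -> : a = s by [].
    apply/ffunP => j; case: (eqVneq j i) => [e|jn]; last exact: hj.
    by subst j.
  case: (eqVneq (a i) (t i)) => [ei _|nti]; last by rewrite !mulr0 addr0 ltxx.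
  suff -> : a = t by [].
  apply/ffunP => j; case: (eqVneq j i) => [e|jn]; first by subst j.
  by rewrite hj // hi.
- move=> k ak hP1.
  have g0 : forall j b, 0 <= deviate1 (dfwith (pure s) (pdelta (s i))) ak j b.
    apply: dev1_ge0; apply: dfwith_ge0 => *; apply: pdelta_ge0.
  rewrite lt_def (mlext_ge0 _ g0) ?andbT; last by move=> c; case/andP: (hp c).
  apply/eqP => hP0.
  have es : forall j b, dfwith (pure s) (pdelta (s i)) j b = pure s j b by apply: dfwith_self.
  rewrite (mlext_congr _ (deviate1_congr ak es)) (mlext_congr _ (dev1_pure _ _)) in hP0.
  rewrite (mlext_congr _ (deviate1_congr ak e1)) (mlext_congr _ (dev1_pure _ _)) in hP1.
  rewrite !mlext_pure' in hP0 hP1.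
  case: (eqVneq k i) => [e|nki].
    subst k.
    have : mk1 t ak = mk1 s ak.
      apply/ffunP => j; case: (eqVneq i j) => [<-|ne]; first by rewrite !mk1_in.
      by rewrite !mk1_out // hi // eq_sym.
    by move=> ee; rewrite ee hP0 ltxx in hP1.
  apply: hnJ; exists [set i; k], (mk1 t ak); split.
    by rewrite cards2 eq_sym nki.
  split; first by apply/set0Pn; exists i; rewrite in_set2 eqxx.
  split.
    have eu : updJ s (mk1 t ak) [set i; k] = mk1 t ak.
      apply: updJ_eq => // j.
      rewrite in_set2 negb_or => /andP [ji jk]; rewrite mk1_out; last by rewrite eq_sym.
      by rewrite hi.
    by rewrite mlext_dev_pure eu.
  move=> J' hprop; rewrite mlext_dev_pure.
  have sub := proper_sub hprop.
  have hJ' : forall j, j \in J' -> (j == i) || (j == k).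
    by move=> j hj; rewrite -in_set2; apply: (subsetP sub).
  case: (boolP (i \in J')) => iJ; case: (boolP (k \in J')) => kJ.
  + exfalso; move: hprop; rewrite properE => /andP [_ /negP]; apply.
    by apply/subsetP => j; rewrite in_set2 => /orP [/eqP ->|/eqP ->].
  + rewrite -pt; congr (p _); apply: updJ_eq => j hj.
      case/orP: (hJ' j hj) => /eqP e; subst j; last by rewrite hj in kJ.
      by rewrite mk1_out // eq_sym.
    by rewrite hi //; apply: contraNneq hj => ->.
  + rewrite -hP0; congr (p _); apply: updJ_eq => j hj.
      case/orP: (hJ' j hj) => /eqP e; subst j; first by rewrite hj in iJ.
      by rewrite !mk1_in.
    rewrite mk1_out //; apply: contraNneq hj => <-; exact: kJ.
  + rewrite -ps; congr (p _); apply: updJ_eq => // j hj.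
    by case/orP: (hJ' j hj) => /eqP e; subst j; [rewrite hj in iJ|rewrite hj in kJ].
- apply: inWHx_congr hWs => j b; by rewrite dfwith_self.
Qed.

Lemma mlext_lower f (z : mp) j (b : A j) : (forall a, 0 <= f a) -> (forall j b, 0 <= z j b) ->
  z j b * mlext f (dfwith z (pdelta b)) <= mlext f z.
Proof.
move=> hf hz; rewrite (mlext_expand f z j) (bigD1 b) //= lerDl.
apply: sumr_ge0 => c _; apply: mulr_ge0 => //; apply: mlext_ge0 => //.
by apply: dfwith_ge0 => // c'; apply: pdelta_ge0.
Qed.

Lemma step1 (C : {set profile A}) (x : mp) w : ~ inW r p w -> is_component p C ->
  inXC C x -> inWHx r p x w -> exists s, s \in C /\ inWHx r p (pure s) w.
Proof.
move=> hnW hC [hmix hpos] h0.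
have ex : forall j, exists b, 0 < x j b.
  move=> j; case: (hmix j) => hx0 hx1.
  have : [exists b, 0 < x j b].
    rewrite -(negbK [exists b, _]); apply/negP => /existsPn h.
    have : \sum_b x j b <= 0 by apply: sumr_le0 => b _; rewrite leNgt h.
    by rewrite hx1 ler10.
  by case/existsP => b hb; exists b.
pose s : profile A := [ffun j => xchoose (ex j)].
have hs : forall j, 0 < x j (s j) by move=> j; rewrite ffunE; exact: (xchooseP (ex j)).
have hxge : forall j b, 0 <= x j b by move=> j; case: (hmix j).
have claim : forall n (J : {set I}), #|J| = n -> inWHx r p (deviate x J s) w.
  elim=> [|n IH] J hn.
    move/eqP: hn; rewrite cards_eq0 => /eqP ->.
    by apply: inWHx_congr h0 => j b; rewrite /deviate in_set0.
  have [l hl] : exists l, l \in J by apply/set0Pn; rewrite -card_gt0 hn.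
  have hn' : #|J :\ l| = n by move: hn; rewrite (cardsD1 l J) hl add1n => -[].
  have IH' := IH _ hn'.
  set x' := deviate x (J :\ l) s in IH'.
  have lJ' : l \notin J :\ l by rewrite in_setD1 eqxx.
  have x'ge : forall j b, 0 <= x' j b.
    by move=> j b; rewrite /x' /deviate; case: ifP => _; [apply: pdelta_ge0|apply: hxge].
  have x'sum : forall j, \sum_b x' j b = 1.
    by move=> j; rewrite /x' /deviate; case: ifP => _; [apply: sum_pdelta|case: (hmix j)].
  have x'pos : forall j b, 0 < x' j b -> 0 < x j b.
    move=> j b; rewrite /x' /deviate; case: ifP => _ //.
    by move/pdelta_pos => ->.
  have e0 : forall j b, dfwith x' (x l) j b = x' j b.
    move=> j b; rewrite -(dfwith_self x' l b); apply: (@dfwith_congr _ _ A x' x' l (x l) (x' l)) => // b'.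
    by rewrite /x' /deviate (negbTE lJ').
  have e1 : forall j b, dfwith x' (pdelta (s l)) j b = deviate x J s j b.
    move=> j; case: (eqVneq l j) => [<-|ne] b; first by rewrite dfwith_in /deviate hl.
    by rewrite dfwith_out // /x' /deviate in_setD1 eq_sym ne.
  apply: (inWHx_congr e1).
  apply: (@path_lemma _ _ A r p hr hp x' l (x l) (pdelta (s l)) w).
  - exact: x'ge.
  - exact: hxge.
  - by move=> b; apply: pdelta_ge0.
  - exact: hnW.
  - move=> tt /andP [t0 t1]; exists C; split => //; split.
      move=> j; split.
        apply: dfwith_ge0 => //.
        by apply: mix_ge0; [rewrite ltW| |] => // b; apply: pdelta_ge0.
      case: (eqVneq l j) => [<-|ne].
        by rewrite dfwith_in mix_sum // ?sum_pdelta //; case: (hmix l).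
      by rewrite dfwith_out.
    move=> a ha; apply: hpos => j; move: (ha j).
    case: (eqVneq l j) => [<-|ne]; last by rewrite dfwith_out //; apply: x'pos.
    rewrite dfwith_in /mix ffunE pdeltaE.
    case: (eqVneq (a l) (s l)) => [->|nas]; first by move=> _; apply: hs.
    rewrite mulr0 addr0 => H; rewrite ltNge; apply/negP => hle.
    have : (1 - tt) * x l (a l) <= 0 by apply: mulr_ge0_le0 => //; lra.
    by lra.
  - move=> k ak hP1.
    case: (eqVneq k l) => [e|nkl].
      subst k; rewrite (mlext_congr _ (y' := deviate1 (dfwith x' (pdelta (s l))) ak)) //.
      apply: dfwith_congr => // j jn b.
      by rewrite !dfwith_out // eq_sym.
    have zl : deviate1 (dfwith x' (x l)) ak l (s l) = x l (s l).
      by rewrite /deviate1 (dfwith_out _ _ nkl) dfwith_in.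
    have ez : forall j b, dfwith (deviate1 (dfwith x' (x l)) ak) (pdelta (s l)) j b
        = deviate1 (dfwith x' (pdelta (s l))) ak j b.
      move=> j; rewrite /deviate1; case: (eqVneq l j) => [<-|ne] b.
        by rewrite dfwith_in (dfwith_out _ _ nkl) dfwith_in.
      rewrite dfwith_out //; move: b; case: (eqVneq k j) => [<-|ne'] b; first by rewrite !dfwith_in.
      by rewrite !dfwith_out.
    have zge : forall j b, 0 <= deviate1 (dfwith x' (x l)) ak j b.
      by apply: dev1_ge0; apply: dfwith_ge0.
    have hl1 := mlext_lower (s l) (fun c => proj1 (andP (hp c))) zge.
    rewrite (mlext_congr _ ez) zl in hl1.
    apply: lt_le_trans hl1; exact: mulr_gt0.
  - exact: inWHx_congr IH'.
exists s; split; first by apply: hpos.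
have := claim _ setT erefl; apply: inWHx_congr => j b.
by rewrite /deviate in_setT.
Qed.

End Comb.

Unset Implicit Arguments. Set Strict Implicit.

Theorem mainTheorem8 (R : realType) (I : finType) (A : I -> finType)
  (r : I -> profile A -> R) (p : profile A -> R)
  (hA : forall i, (0 < #|A i|)%N)
  (hr : forall i a, 0 < r i a <= 1)
  (hp : forall a, 0 <= p a <= 1)
  (hnorect : forall C, is_component p C -> ~ rectangular C)
  (w : I -> R) :
  inWH r p w -> ~ inW r p w ->
  exists C (x : mprofile A), is_component p C /\ inXC C x /\
    inWHx r p x w /\ has_joint_exit p x.
Proof.
move=> [x0 [[C0 [hC0 hx0]] hW0]] hnW.
apply: Classical_Prop.NNPP => H.
have noJ : forall C x, is_component p C -> inXC C x -> inWHx r p x w -> ~ has_joint_exit p x.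
  by move=> C x hC hx hw hj; apply: H; exists C, x.
have [s0 [s0C hs0]] := step1 hp hr hnW hC0 hx0 hW0.
case: (hC0) => a0 [pa0 eC0].
have inC : forall b, (b \in C0) = connect (adjB p) a0 b by move=> b; rewrite eC0 inE.
have pC : forall b, b \in C0 -> p b = 0.
  move=> b; rewrite inC => hb.
  apply: (connect_prop (P := fun b => p b = 0) hb) => // x y _ /adjBP [].
  by move=> _ -> _.
have symc : connect_sym (adjB p) := sym_connect_sym (adjB_sym p).
have conC : forall b c, b \in C0 -> c \in C0 -> connect (adjB p) b c.
  move=> b c; rewrite !inC => hb hc; apply: connect_trans hc.
  by rewrite symc.
have closedC : forall b c, b \in C0 -> connect (adjB p) b c -> c \in C0.
  by move=> b c; rewrite !inC => hb hc; apply: connect_trans hb hc.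
have pureC : forall s, s \in C0 -> inXC C0 (pure (R:=R) s).
  move=> s sC; split; first exact: pure_mixed.
  move=> a ha; suff -> : a = s by [].
  by apply/ffunP => j; apply: pdelta_pos (ha j).
have good : forall s, s \in C0 -> inWHx r p (pure s) w.
  move=> s sC.
  suff : s \in C0 /\ inWHx r p (pure s) w by case.
  apply: (connect_prop (P := fun b => b \in C0 /\ inWHx r p (pure b) w) (conC _ _ s0C sC)) => //.
  move=> x y hx exy [xC hxw]; have yC : y \in C0.
    by apply: closedC s0C _; apply: connect_trans hx (connect1 exy).
  split => //; apply: (edge_step hp hr hnW hC0 xC yC exy) => //.
  exact: noJ hC0 (pureC x xC) hxw.
have PPall := fun s (sC : s \in C0) => PP hp (noJ _ _ hC0 (pureC s sC) (good s sC)) (pC s sC).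
apply: (hnorect _ hC0).
exists (fun i => [set (c : profile A) i | c in C0]).
apply/setP => a; rewrite inE; apply/idP/forallP.
  by move=> aC i; apply/imsetP; exists a.
move=> h.
have hl : forall l, p (updJ s0 a [set l]) = 0.
  move=> l; have [b bC eb] := imsetP (h l).
  have hb : p (updJ b a [set l]) = 0.
    rewrite -(pC b bC); congr (p _); apply: updJ_eq => // j.
    by rewrite in_set1 => /eqP e; subst j.
  suff : s0 \in C0 /\ p (updJ s0 a [set l]) = 0 by case.
  apply: (connect_prop (P := fun x => x \in C0 /\ p (updJ x a [set l]) = 0) (conC _ _ bC s0C)) => //.
  move=> x y hx exy [xC hxp]; split.
    by apply: closedC bC _; apply: connect_trans hx (connect1 exy).
  exact: (DC exy (PPall x xC) hxp).
have hall : forall J, p (updJ s0 a J) = 0 by move=> J; apply: (PPall s0 s0C J a) => l _; apply: hl.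
have := CC (pC s0 s0C) hall setT; rewrite updJT => hc.
exact: closedC s0C hc.
Qed.
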